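(* Let $N\subset\mathbb{R}^3$ be an open set with coordinates $(t,x,y)$ and metric $g_f^{\varepsilon}=\varepsilon\,dx^2+f(x,y)\,dy^2+2\,dt\,dy$ ($\varepsilon=\pm1$, $f$ smooth), with orthonormal frame $$e_1=\partial_x,\quad e_2=\tfrac{2-f}{2\sqrt2}\partial_t+\tfrac1{\sqrt2}\partial_y,\quad e_3=\tfrac{2+f}{2\sqrt2}\partial_t-\tfrac1{\sqrt2}\partial_y.$$ Let $\Sigma\subset N$ be a non-degenerate totally umbilical surface with unit normal $\mathcal{V}=v_1e_1+v_2e_2+v_3e_3$, where $v_i\in C^\infty(\Sigma)$ and $\varepsilon v_1^2+v_2^2-v_3^2=\delta=\pm1$, and assume $v_1\neq0$ on $\Sigma$. Then $$v_3(v_2-v_3)^2f_{xxx}=0$$ on $\Sigma$. Hence at each point of $\Sigma$ there is a small neighbourhood in which one or more of $f_{xxx}=0$, $v_3=0$, $v_2=v_3$ must occur.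
   Context: $\langle e_1,e_1\rangle=\varepsilon$, $\langle e_2,e_2\rangle=1$, $\langle e_3,e_3\rangle=-1$. A surface is non-degenerate if its induced metric is Riemannian or Lorentzian. With $\overline{\nabla}$ the Levi-Civita connection of $g_f^\varepsilon$, $\Sigma$ is totally umbilical if there is $\lambda\in C^\infty(\Sigma)$ with $-\overline{\nabla}_T\mathcal{V}=\lambda T$ for all $T$ tangent to $\Sigma$. Here $f_{xxx}$ is evaluated at the points of $\Sigma$. *)

(* Defs.v *)
From Stdlib Require Import Reals List.
From Coquelicot Require Import Coquelicot.
Open Scope R_scope.

(* iterated partial derivative: [true] = d/d(first var), [false] = d/d(second var);
   the head of the list is the last derivative applied *)
Fixpoint pd (l : list bool) (h : R -> R -> R) : R -> R -> R :=
  match l with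
  | nil => h
  | b :: l' =>
      let g := pd l' h in
      if b then (fun a c => Derive (fun s => g s c) a)
      else (fun a c => Derive (fun s => g a s) c)
  end.

Definition open2 (D : R -> R -> Prop) : Prop :=
  open (fun p : R * R => D (fst p) (snd p)).

Definition smooth_on (D : R -> R -> Prop) (h : R -> R -> R) : Prop :=
  forall (l : list bool) (a c : R), D a c ->
    ex_derive (fun s => pd l h s c) a /\
    ex_derive (fun s => pd l h a s) c /\
    continuous (fun p : R * R => pd l h (fst p) (snd p)) (a, c).

(* coordinates indexed 0 = t, 1 = x, 2 = y *)

Definition sum3 (F : nat -> R) : R := F 0%nat + F 1%nat + F 2%nat.

Definition gmet (eps : R) (f : R -> R -> R) (i j : nat) (t x y : R) : R :=
  match i, j with
  | 0%nat, 2%nat => 1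
  | 2%nat, 0%nat => 1
  | 1%nat, 1%nat => eps
  | 2%nat, 2%nat => f x y
  | _, _ => 0
  end.

Definition ginv (eps : R) (f : R -> R -> R) (k l : nat) (t x y : R) : R :=
  match k, l with
  | 0%nat, 0%nat => - f x y
  | 0%nat, 2%nat => 1
  | 2%nat, 0%nat => 1
  | 1%nat, 1%nat => / eps
  | _, _ => 0
  end.

Definition dmet (eps : R) (f : R -> R -> R) (l i j : nat) (t x y : R) : R :=
  match l with
  | 0%nat => Derive (fun s => gmet eps f i j s x y) t
  | 1%nat => Derive (fun s => gmet eps f i j t s y) x
  | _ => Derive (fun s => gmet eps f i j t x s) y
  end.

Definition Christ (eps : R) (f : R -> R -> R) (k i j : nat) (t x y : R) : R :=
  / 2 * sum3 (fun l => ginv eps f k l t x y *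
     (dmet eps f i j l t x y + dmet eps f j i l t x y - dmet eps f l i j t x y)).

(* coordinate components (k = t,x,y) of the orthonormal frame e_1,e_2,e_3
   (indexed a = 0,1,2) *)
Definition efr (f : R -> R -> R) (a k : nat) (t x y : R) : R :=
  match a, k with
  | 0%nat, 1%nat => 1
  | 1%nat, 0%nat => (2 - f x y) / (2 * sqrt 2)
  | 1%nat, 2%nat => / sqrt 2
  | 2%nat, 0%nat => (2 + f x y) / (2 * sqrt 2)
  | 2%nat, 2%nat => - / sqrt 2
  | _, _ => 0
  end.

(* X k u w = k-th coordinate of the point with parameters (u,w) *)

Definition Xu (X : nat -> R -> R -> R) (k : nat) (u w : R) : R :=
  Derive (fun s => X k s w) u.
Definition Xw (X : nat -> R -> R -> R) (k : nat) (u w : R) : R :=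
  Derive (fun s => X k u s) w.

Definition gX (eps : R) (f : R -> R -> R) (X : nat -> R -> R -> R)
  (u w : R) (A B : nat -> R) : R :=
  sum3 (fun i => sum3 (fun j =>
     gmet eps f i j (X 0%nat u w) (X 1%nat u w) (X 2%nat u w) * A i * B j)).

Definition Vc (f : R -> R -> R) (X : nat -> R -> R -> R) (v : nat -> R -> R -> R)
  (k : nat) (u w : R) : R :=
  sum3 (fun a => v a u w * efr f a k (X 0%nat u w) (X 1%nat u w) (X 2%nat u w)).

Definition nablaU (eps : R) (f : R -> R -> R) (X v : nat -> R -> R -> R)
  (k : nat) (u w : R) : R :=
  Derive (fun s => Vc f X v k s w) u +
  sum3 (fun i => sum3 (fun j =>
    Christ eps f k i j (X 0%nat u w) (X 1%nat u w) (X 2%nat u w) *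
    Xu X i u w * Vc f X v j u w)).

Definition nablaW (eps : R) (f : R -> R -> R) (X v : nat -> R -> R -> R)
  (k : nat) (u w : R) : R :=
  Derive (fun s => Vc f X v k u s) w +
  sum3 (fun i => sum3 (fun j =>
    Christ eps f k i j (X 0%nat u w) (X 1%nat u w) (X 2%nat u w) *
    Xw X i u w * Vc f X v j u w)).

(* Main.v *)
Require Import Defs.
From Stdlib Require Import Reals List Lra.
From Coquelicot Require Import Coquelicot.
Open Scope R_scope.

Lemma open2_loc2 (D : R -> R -> Prop) a c : open2 D -> D a c -> locally_2d D a c.
Proof.
  intros HD Hac. apply locally_2d_locally. apply (HD (a,c)). exact Hac.
Qed.

Lemma open2_locu (D : R -> R -> Prop) a c : open2 D -> D a c -> locally a (fun s => D s c).
Proof. intros HD H. apply (locally_2d_1d_const_y D). now apply open2_loc2. Qed.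

Lemma open2_locw (D : R -> R -> Prop) a c : open2 D -> D a c -> locally c (fun s => D a s).
Proof. intros HD H. apply (locally_2d_1d_const_x D). now apply open2_loc2. Qed.

Lemma smooth_exdiff D h : smooth_on D h ->
  forall n l a c, D a c -> ex_diff_n (pd l h) n a c.
Proof.
  intros S n. induction n as [|n IH]; intros l a c Hac.
  - simpl. split; [|exact I].
    apply continuity_2d_pt_filterlim. destruct (S l a c Hac) as [_ [_ H]]. exact H.
  - simpl. destruct (S l a c Hac) as [H1 [H2 H3]].
    split. { apply continuity_2d_pt_filterlim. exact H3. }
    split. exact H1. split. exact H2.
    split. exact (IH (true :: l) a c Hac). exact (IH (false :: l) a c Hac).
Qed.

Lemma smooth_diff D h l a c : open2 D -> smooth_on D h -> D a c ->
  differentiable_pt_lim (pd l h) a c (pd (true :: l) h a c) (pd (false :: l) h a c).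
Proof.
  intros HD S Hac.
  assert (HT : DL_regular_n (pd l h) 1 a c).
  { apply Taylor_Lagrange_2d.
    destruct (open2_loc2 D a c HD Hac) as [d Hd]. exists d. intros u v Hu Hv.
    apply (smooth_exdiff D h S). now apply Hd. }
  destruct HT as [K [d HK]].
  intros eps.
  assert (Hp : 0 < eps / (Rabs K + 1)).
  { apply Rdiv_lt_0_compat. apply cond_pos. pose proof (Rabs_pos K). lra. }
  exists (mkposreal _ (Rmin_pos _ _ (cond_pos d) Hp)).
  simpl. intros u v Hu Hv.
  assert (Hu1 : Rabs (u - a) < d) by (eapply Rlt_le_trans; [exact Hu| apply Rmin_l]).
  assert (Hv1 : Rabs (v - c) < d) by (eapply Rlt_le_trans; [exact Hv| apply Rmin_l]).
  assert (Hu2 : Rabs (u - a) < eps / (Rabs K + 1)) by (eapply Rlt_le_trans; [exact Hu| apply Rmin_r]).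
  assert (Hv2 : Rabs (v - c) < eps / (Rabs K + 1)) by (eapply Rlt_le_trans; [exact Hv| apply Rmin_r]).
  specialize (HK u v Hu1 Hv1).
  assert (E : DL_pol 1 (pd l h) a c (u - a) (v - c) =
     pd l h a c + (pd (true :: l) h a c * (u - a) + pd (false :: l) h a c * (v - c))).
  { unfold DL_pol, differential. simpl. unfold partial_derive. simpl.
    unfold Binomial.C. simpl. field. }
  rewrite E in HK.
  set (M := Rmax (Rabs (u - a)) (Rabs (v - c))) in *.
  assert (HM0 : 0 <= M) by (unfold M; eapply Rle_trans; [apply Rabs_pos | apply Rmax_l]).
  assert (HM1 : M < eps / (Rabs K + 1)) by (unfold M; apply Rmax_case; assumption).
  assert (HM2 : M * (Rabs K + 1) <= eps).
  { pose proof (Rabs_pos K).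
    apply Rlt_le. apply (Rmult_lt_compat_r (Rabs K + 1)) in HM1; [|lra].
    unfold Rdiv in HM1. rewrite Rmult_assoc, Rinv_l in HM1; lra. }
  change (Rabs (pd l h u v - pd l h a c - (pd (true :: l) h a c * (u - a) + pd (false :: l) h a c * (v - c))) <= eps * M).
  replace (pd l h u v - pd l h a c - (pd (true :: l) h a c * (u - a) + pd (false :: l) h a c * (v - c)))
    with (pd l h u v - (pd l h a c + (pd (true :: l) h a c * (u - a) + pd (false :: l) h a c * (v - c)))) by ring.
  eapply Rle_trans. exact HK.
  assert (K * M ^ 2 <= Rabs K * M * M).
  { simpl. rewrite Rmult_1_r, <- Rmult_assoc. apply Rmult_le_compat_r; [lra|].
    apply Rmult_le_compat_r; [lra| apply Rle_abs]. }
  assert (Rabs K * M * M <= eps * M).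
  { apply Rmult_le_compat_r; [lra|]. pose proof (Rabs_pos K). nra. }
  lra.
Qed.

Lemma chain2 (h : R -> R -> R) p q s0 hx hy dp dq :
  differentiable_pt_lim h (p s0) (q s0) hx hy ->
  is_derive p s0 dp -> is_derive q s0 dq ->
  is_derive (fun s => h (p s) (q s)) s0 (hx * dp + hy * dq).
Proof.
  intros H Hp Hq. apply is_derive_Reals. apply is_derive_Reals in Hp, Hq.
  apply derivable_pt_lim_comp_2d; assumption.
Qed.

Lemma smooth_schwarz U g a c : open2 U -> smooth_on U g -> U a c ->
  Derive (fun z => Derive (fun t => g z t) c) a = Derive (fun z => Derive (fun t => g t z) a) c.
Proof.
  intros HU S Hac. apply Schwarz.
  - destruct (open2_loc2 U a c HU Hac) as [d Hd]. exists d. intros u v Hu Hv.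
    pose proof (Hd u v Hu Hv) as H.
    destruct (S nil u v H) as [H1 [H2 _]].
    destruct (S (false :: nil) u v H) as [H3 _].
    destruct (S (true :: nil) u v H) as [_ [H4 _]].
    simpl in *. tauto.
  - apply continuity_2d_pt_filterlim. destruct (S (true :: false :: nil) a c Hac) as [_ [_ H]]. exact H.
  - apply continuity_2d_pt_filterlim. destruct (S (false :: true :: nil) a c Hac) as [_ [_ H]]. exact H.
Qed.

Lemma pd_lin U g h (al be : R) : open2 U -> smooth_on U g -> smooth_on U h ->
  forall l a c, U a c -> pd l (fun a c => al * g a c + be * h a c) a c = al * pd l g a c + be * pd l h a c.
Proof.
  intros HU Sg Sh l. induction l as [|b l IH]; intros a c Hac.
  - reflexivity.
  - destruct b; simpl.
    + rewrite (Derive_ext_loc _ (fun s => al * pd l g s c + be * pd l h s c)).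
      2:{ generalize (open2_locu U a c HU Hac). apply filter_imp. intros s Hs. now apply IH. }
      rewrite Derive_plus. rewrite !Derive_scal. reflexivity.
      apply ex_derive_scal. apply (Sg l a c Hac). apply ex_derive_scal. apply (Sh l a c Hac).
    + rewrite (Derive_ext_loc _ (fun s => al * pd l g a s + be * pd l h a s)).
      2:{ generalize (open2_locw U a c HU Hac). apply filter_imp. intros s Hs. now apply IH. }
      rewrite Derive_plus. rewrite !Derive_scal. reflexivity.
      apply ex_derive_scal. apply (Sg l a c Hac). apply ex_derive_scal. apply (Sh l a c Hac).
Qed.

Lemma smooth_lin U g h (al be : R) : open2 U -> smooth_on U g -> smooth_on U h ->
  smooth_on U (fun a c => al * g a c + be * h a c).
Proof.
  intros HU Sg Sh l a c Hac.
  destruct (Sg l a c Hac) as [G1 [G2 G3]]. destruct (Sh l a c Hac) as [H1 [H2 H3]].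
  split; [|split].
  - eapply ex_derive_ext_loc.
    2:{ apply (@ex_derive_plus R_AbsRing R_NormedModule (fun s => al * pd l g s c) (fun s => be * pd l h s c)); apply ex_derive_scal; eassumption. }
    generalize (open2_locu U a c HU Hac). apply filter_imp. intros s Hs. symmetry. now apply (pd_lin U).
  - eapply ex_derive_ext_loc.
    2:{ apply (@ex_derive_plus R_AbsRing R_NormedModule (fun s => al * pd l g a s) (fun s => be * pd l h a s)); apply ex_derive_scal; eassumption. }
    generalize (open2_locw U a c HU Hac). apply filter_imp. intros s Hs. symmetry. now apply (pd_lin U).
  - eapply filterlim_ext_loc.
    { generalize (HU (a, c) Hac). apply filter_imp. intros p Hp. symmetry. now apply (pd_lin U). }
    rewrite (pd_lin U); auto.
    apply (continuous_plus (fun p : R * R => al * pd l g (fst p) (snd p)) (fun p : R * R => be * pd l h (fst p) (snd p)));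
    [apply (@continuous_mult _ R_AbsRing (fun _ => al) (fun p : R * R => pd l g (fst p) (snd p)))
    |apply (@continuous_mult _ R_AbsRing (fun _ => be) (fun p : R * R => pd l h (fst p) (snd p)))];
    try apply continuous_const; assumption.
Qed.

Lemma nabla2U eps f X v u w : nablaU eps f X v 2 u w = Derive (fun s => Vc f X v 2 s w) u.
Proof.
  unfold nablaU, Christ, sum3, ginv, dmet, gmet. simpl. rewrite !Derive_const. ring.
Qed.
Lemma nabla2W eps f X v u w : nablaW eps f X v 2 u w = Derive (fun s => Vc f X v 2 u s) w.
Proof.
  unfold nablaW, Christ, sum3, ginv, dmet, gmet. simpl. rewrite !Derive_const. ring.
Qed.
Lemma nabla1U eps f X v u w : eps <> 0 -> nablaU eps f X v 1 u w = Derive (fun s => Vc f X v 1 s w) u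
  - / 2 / eps * Derive (fun s => f s (X 2%nat u w)) (X 1%nat u w) * Xu X 2 u w * Vc f X v 2 u w.
Proof.
  intros He.
  unfold nablaU, Christ, sum3, ginv, dmet, gmet. simpl. rewrite !Derive_const. field. auto.
Qed.
Lemma nabla1W eps f X v u w : eps <> 0 -> nablaW eps f X v 1 u w = Derive (fun s => Vc f X v 1 u s) w
  - / 2 / eps * Derive (fun s => f s (X 2%nat u w)) (X 1%nat u w) * Xw X 2 u w * Vc f X v 2 u w.
Proof.
  intros He.
  unfold nablaW, Christ, sum3, ginv, dmet, gmet. simpl. rewrite !Derive_const. field. auto.
Qed.
Lemma Vc2 f X v u w : Vc f X v 2 u w = (v 1%nat u w - v 2%nat u w) / sqrt 2.
Proof. unfold Vc, sum3, efr. simpl. field. apply Rgt_not_eq, sqrt_lt_R0. lra. Qed.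
Lemma Vc1 f X v u w : Vc f X v 1 u w = v 0%nat u w.
Proof. unfold Vc, sum3, efr. simpl. ring. Qed.
Lemma gXV eps f X v u w A : gX eps f X u w (fun k => Vc f X v k u w) A =
  Vc f X v 0 u w * A 2%nat + eps * v 0%nat u w * A 1%nat
  + (v 1%nat u w - v 2%nat u w) / sqrt 2 * (A 0%nat + f (X 1%nat u w) (X 2%nat u w) * A 2%nat).
Proof. unfold gX, sum3, gmet. rewrite Vc1, Vc2. simpl. ring. Qed.

Lemma sm_u U g l a c : smooth_on U g -> U a c -> ex_derive (fun s => pd l g s c) a.
Proof. intros S H. apply (S l a c H). Qed.
Lemma sm_w U g l a c : smooth_on U g -> U a c -> ex_derive (fun s => pd l g a s) c.
Proof. intros S H. apply (S l a c H). Qed.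

Lemma comp_u U D f x y l u w : open2 D -> smooth_on D f -> smooth_on U x -> smooth_on U y ->
  U u w -> D (x u w) (y u w) ->
  is_derive (fun s => pd l f (x s w) (y s w)) u
    (pd (true :: l) f (x u w) (y u w) * Derive (fun s => x s w) u +
     pd (false :: l) f (x u w) (y u w) * Derive (fun s => y s w) u).
Proof.
  intros HD Sf Sx Sy HU HDp.
  apply (chain2 (pd l f) (fun s => x s w) (fun s => y s w)).
  - apply (smooth_diff D); auto.
  - apply Derive_correct. apply (sm_u U x nil u w Sx HU).
  - apply Derive_correct. apply (sm_u U y nil u w Sy HU).
Qed.

Lemma comp_w U D f x y l u w : open2 D -> smooth_on D f -> smooth_on U x -> smooth_on U y ->
  U u w -> D (x u w) (y u w) ->
  is_derive (fun s => pd l f (x u s) (y u s)) w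
    (pd (true :: l) f (x u w) (y u w) * Derive (fun s => x u s) w +
     pd (false :: l) f (x u w) (y u w) * Derive (fun s => y u s) w).
Proof.
  intros HD Sf Sx Sy HU HDp.
  apply (chain2 (pd l f) (fun s => x u s) (fun s => y u s)).
  - apply (smooth_diff D); auto.
  - apply Derive_correct. apply (sm_w U x nil u w Sx HU).
  - apply Derive_correct. apply (sm_w U y nil u w Sy HU).
Qed.

Lemma H1d (f g : R -> R) df dg u :
  is_derive f u df -> is_derive g u dg ->
  is_derive (fun z => - f z * g z) u (-(df * g u + f u * dg)).
Proof.
  intros Hf Hg.
  assert (Ef : Derive (fun x => f x) u = df) by (apply is_derive_unique; exact Hf).
  assert (Eg : Derive (fun x => g x) u = dg) by (apply is_derive_unique; exact Hg).
  auto_derive.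
  - repeat split; eexists; eassumption.
  - rewrite Ef, Eg. ring.
Qed.

Lemma H2d (f g a b c : R -> R) df dg da db dc K u :
  is_derive f u df -> is_derive g u dg -> is_derive a u da -> is_derive b u db -> is_derive c u dc ->
  is_derive (fun z => - f z * g z + K * a z * b z * c z) u
    (-(df * g u + f u * dg) + K * (da * b u * c u + a u * db * c u + a u * b u * dc)).
Proof.
  intros Hf Hg Ha Hb Hc.
  assert (Ef : Derive (fun x => f x) u = df) by (apply is_derive_unique; exact Hf).
  assert (Eg : Derive (fun x => g x) u = dg) by (apply is_derive_unique; exact Hg).
  assert (Ea : Derive (fun x => a x) u = da) by (apply is_derive_unique; exact Ha).
  assert (Eb : Derive (fun x => b x) u = db) by (apply is_derive_unique; exact Hb).
  assert (Ec : Derive (fun x => c x) u = dc) by (apply is_derive_unique; exact Hc).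
  auto_derive.
  - repeat split; eexists; eassumption.
  - rewrite Ef, Eg, Ea, Eb, Ec. ring.
Qed.

Lemma H3d (a b c : R -> R) da db dc K u :
  is_derive a u da -> is_derive b u db -> is_derive c u dc ->
  is_derive (fun z => - (K * a z * b z) * c z) u
    (-(K * (da * b u + a u * db) * c u + K * a u * b u * dc)).
Proof.
  intros Ha Hb Hc.
  assert (Ea : Derive (fun x => a x) u = da) by (apply is_derive_unique; exact Ha).
  assert (Eb : Derive (fun x => b x) u = db) by (apply is_derive_unique; exact Hb).
  assert (Ec : Derive (fun x => c x) u = dc) by (apply is_derive_unique; exact Hc).
  auto_derive.
  - repeat split; eexists; eassumption.
  - rewrite Ea, Eb, Ec. ring.
Qed.

Lemma E1_lemma U lam y phi u w : open2 U -> smooth_on U lam -> smooth_on U y -> smooth_on U phi ->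
  (forall a c, U a c -> Derive (fun s => phi s c) a = - lam a c * Derive (fun s => y s c) a) ->
  (forall a c, U a c -> Derive (fun s => phi a s) c = - lam a c * Derive (fun s => y a s) c) ->
  U u w ->
  Derive (fun s => lam s w) u * Derive (fun s => y u s) w -
  Derive (fun s => lam u s) w * Derive (fun s => y s w) u = 0.
Proof.
  intros HU Sl Sy Sp Hu Hw Huw.
  pose proof (smooth_schwarz U phi u w HU Sp Huw) as Sch.
  pose proof (smooth_schwarz U y u w HU Sy Huw) as SchY.
  assert (L1 : Derive (fun z => Derive (fun t => phi z t) w) u =
     - (Derive (fun z => lam z w) u * Derive (fun t => y u t) w
         + lam u w * Derive (fun z => Derive (fun t => y z t) w) u)).
  { transitivity (Derive (fun z => - lam z w * Derive (fun t => y z t) w) u).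
    { apply Derive_ext_loc. generalize (open2_locu U u w HU Huw). apply filter_imp. intros s Hs. now apply Hw. }
    apply is_derive_unique.
    apply (H1d (fun z => lam z w) (fun z => Derive (fun t => y z t) w)); apply Derive_correct.
    apply (sm_u U lam nil u w Sl Huw). apply (sm_u U y (false :: nil) u w Sy Huw). }
  assert (L2 : Derive (fun z => Derive (fun t => phi t z) u) w =
     - (Derive (fun z => lam u z) w * Derive (fun t => y t w) u
         + lam u w * Derive (fun z => Derive (fun t => y t z) u) w)).
  { transitivity (Derive (fun z => - lam u z * Derive (fun t => y t z) u) w).
    { apply Derive_ext_loc. generalize (open2_locw U u w HU Huw). apply filter_imp. intros s Hs. now apply Hu. }
    apply is_derive_unique.
    apply (H1d (fun z => lam u z) (fun z => Derive (fun t => y t z) u)); apply Derive_correct.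
    apply (sm_w U lam nil u w Sl Huw). apply (sm_w U y (true :: nil) u w Sy Huw). }
  rewrite L1, L2 in Sch.
  rewrite SchY in Sch. lra.
Qed.

Lemma E2_lemma U D f lam x y phi xi K u w : open2 U -> open2 D -> smooth_on D f ->
  smooth_on U lam -> smooth_on U x -> smooth_on U y -> smooth_on U phi -> smooth_on U xi ->
  (forall a c, U a c -> D (x a c) (y a c)) ->
  (forall a c, U a c -> Derive (fun s => phi s c) a = - lam a c * Derive (fun s => y s c) a) ->
  (forall a c, U a c -> Derive (fun s => phi a s) c = - lam a c * Derive (fun s => y a s) c) ->
  (forall a c, U a c -> Derive (fun s => xi s c) a = - lam a c * Derive (fun s => x s c) a
      + K * pd (true :: nil) f (x a c) (y a c) * phi a c * Derive (fun s => y s c) a) ->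
  (forall a c, U a c -> Derive (fun s => xi a s) c = - lam a c * Derive (fun s => x a s) c
      + K * pd (true :: nil) f (x a c) (y a c) * phi a c * Derive (fun s => y a s) c) ->
  U u w ->
  Derive (fun s => lam s w) u * Derive (fun s => x u s) w -
  Derive (fun s => lam u s) w * Derive (fun s => x s w) u -
  K * phi u w * pd (true :: true :: nil) f (x u w) (y u w) *
   (Derive (fun s => x s w) u * Derive (fun s => y u s) w - Derive (fun s => x u s) w * Derive (fun s => y s w) u) = 0.
Proof.
  intros HU HD Sf Sl Sx Sy Sp Sxi HXD Hu Hw Hxu Hxw Huw.
  pose proof (smooth_schwarz U xi u w HU Sxi Huw) as Sch.
  pose proof (smooth_schwarz U y u w HU Sy Huw) as SchY.
  pose proof (smooth_schwarz U x u w HU Sx Huw) as SchX.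
  assert (L1 : Derive (fun z => Derive (fun t => xi z t) w) u =
     -(Derive (fun z => lam z w) u * Derive (fun t => x u t) w + lam u w * Derive (fun z => Derive (fun t => x z t) w) u)
     + K * ((pd (true :: true :: nil) f (x u w) (y u w) * Derive (fun s => x s w) u +
             pd (false :: true :: nil) f (x u w) (y u w) * Derive (fun s => y s w) u) * phi u w * Derive (fun t => y u t) w
           + pd (true :: nil) f (x u w) (y u w) * (- lam u w * Derive (fun s => y s w) u) * Derive (fun t => y u t) w
           + pd (true :: nil) f (x u w) (y u w) * phi u w * Derive (fun z => Derive (fun t => y z t) w) u)).
  { transitivity (Derive (fun z => - lam z w * Derive (fun t => x z t) w +
        K * pd (true :: nil) f (x z w) (y z w) * phi z w * Derive (fun t => y z t) w) u).
    { apply Derive_ext_loc. generalize (open2_locu U u w HU Huw). apply filter_imp. intros s Hs. now apply Hxw. }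
    apply is_derive_unique.
    apply (H2d (fun z => lam z w) (fun z => Derive (fun t => x z t) w)
               (fun z => pd (true :: nil) f (x z w) (y z w)) (fun z => phi z w)
               (fun z => Derive (fun t => y z t) w)).
    - apply Derive_correct. apply (sm_u U lam nil u w Sl Huw).
    - apply Derive_correct. apply (sm_u U x (false :: nil) u w Sx Huw).
    - apply (comp_u U D); auto.
    - rewrite <- Hu by auto. apply Derive_correct. apply (sm_u U phi nil u w Sp Huw).
    - apply Derive_correct. apply (sm_u U y (false :: nil) u w Sy Huw). }
  assert (L2 : Derive (fun z => Derive (fun t => xi t z) u) w =
     -(Derive (fun z => lam u z) w * Derive (fun t => x t w) u + lam u w * Derive (fun z => Derive (fun t => x t z) u) w)
     + K * ((pd (true :: true :: nil) f (x u w) (y u w) * Derive (fun s => x u s) w +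
             pd (false :: true :: nil) f (x u w) (y u w) * Derive (fun s => y u s) w) * phi u w * Derive (fun t => y t w) u
           + pd (true :: nil) f (x u w) (y u w) * (- lam u w * Derive (fun s => y u s) w) * Derive (fun t => y t w) u
           + pd (true :: nil) f (x u w) (y u w) * phi u w * Derive (fun z => Derive (fun t => y t z) u) w)).
  { transitivity (Derive (fun z => - lam u z * Derive (fun t => x t z) u +
        K * pd (true :: nil) f (x u z) (y u z) * phi u z * Derive (fun t => y t z) u) w).
    { apply Derive_ext_loc. generalize (open2_locw U u w HU Huw). apply filter_imp. intros s Hs. now apply Hxu. }
    apply is_derive_unique.
    apply (H2d (fun z => lam u z) (fun z => Derive (fun t => x t z) u)
               (fun z => pd (true :: nil) f (x u z) (y u z)) (fun z => phi u z)
               (fun z => Derive (fun t => y t z) u)).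
    - apply Derive_correct. apply (sm_w U lam nil u w Sl Huw).
    - apply Derive_correct. apply (sm_w U x (true :: nil) u w Sx Huw).
    - apply (comp_w U D); auto.
    - rewrite <- Hw by auto. apply Derive_correct. apply (sm_w U phi nil u w Sp Huw).
    - apply Derive_correct. apply (sm_w U y (true :: nil) u w Sy Huw). }
  rewrite L1, L2, SchX, SchY in Sch.
  set (A := Derive (fun z => Derive (fun t => x t z) u) w) in *.
  set (B := Derive (fun z => Derive (fun t => y t z) u) w) in *.
  set (lu := Derive (fun s => lam s w) u) in *.
  set (lw := Derive (fun s => lam u s) w) in *.
  set (xu := Derive (fun s => x s w) u) in *.
  set (xw := Derive (fun s => x u s) w) in *.
  set (yu := Derive (fun s => y s w) u) in *.
  set (yw := Derive (fun s => y u s) w) in *.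
  set (F1 := pd (true :: nil) f (x u w) (y u w)) in *.
  set (F11 := pd (true :: true :: nil) f (x u w) (y u w)) in *.
  set (F12 := pd (false :: true :: nil) f (x u w) (y u w)) in *.
  set (p := phi u w) in *. set (l := lam u w) in *.
  replace (lu * xw - lw * xu - K * p * F11 * (xu * yw - xw * yu))
    with ((-(lw * xu + l * A) + K * ((F11 * xw + F12 * yw) * p * yu + F1 * (- l * yw) * yu + F1 * p * B))
        - (-(lu * xw + l * A) + K * ((F11 * xu + F12 * yu) * p * yw + F1 * (- l * yu) * yw + F1 * p * B))) by ring.
  rewrite Sch. ring.
Qed.

Lemma alg1 a b xu xw yu yw c :
  a * yw - b * yu = 0 -> a * xw - b * xu - c * (xu * yw - xw * yu) = 0 ->
  (xu * yw - xw * yu) * (a + c * yu) = 0 /\ (xu * yw - xw * yu) * (b + c * yw) = 0.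
Proof.
  intros H1 H2. split.
  - replace ((xu * yw - xw * yu) * (a + c * yu)) with (xu * (a * yw - b * yu) - yu * (a * xw - b * xu - c * (xu * yw - xw * yu))) by ring.
    rewrite H1, H2. ring.
  - replace ((xu * yw - xw * yu) * (b + c * yw)) with (xw * (a * yw - b * yu) - yw * (a * xw - b * xu - c * (xu * yw - xw * yu))) by ring.
    rewrite H1, H2. ring.
Qed.

Lemma cont_pd U g l a c : smooth_on U g -> U a c -> continuity_2d_pt (pd l g) a c.
Proof. intros S H. apply continuity_2d_pt_filterlim. apply (S l a c H). Qed.

Lemma F_lemma U D f lam x y phi xi K u w : open2 U -> open2 D -> smooth_on D f ->
  smooth_on U lam -> smooth_on U x -> smooth_on U y -> smooth_on U phi -> smooth_on U xi ->
  (forall a c, U a c -> D (x a c) (y a c)) ->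
  (forall a c, U a c -> Derive (fun s => phi s c) a = - lam a c * Derive (fun s => y s c) a) ->
  (forall a c, U a c -> Derive (fun s => phi a s) c = - lam a c * Derive (fun s => y a s) c) ->
  (forall a c, U a c -> Derive (fun s => xi s c) a = - lam a c * Derive (fun s => x s c) a
      + K * pd (true :: nil) f (x a c) (y a c) * phi a c * Derive (fun s => y s c) a) ->
  (forall a c, U a c -> Derive (fun s => xi a s) c = - lam a c * Derive (fun s => x a s) c
      + K * pd (true :: nil) f (x a c) (y a c) * phi a c * Derive (fun s => y a s) c) ->
  K <> 0 ->
  U u w ->
  Derive (fun s => x s w) u * Derive (fun s => y u s) w - Derive (fun s => x u s) w * Derive (fun s => y s w) u <> 0 ->
  phi u w * pd (true :: true :: true :: nil) f (x u w) (y u w) = 0.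
Proof.
  intros HU HD Sf Sl Sx Sy Sp Sxi HXD Hu Hw Hxu Hxw HK Huw HJ.
  set (J := fun a c => Derive (fun s => x s c) a * Derive (fun s => y a s) c - Derive (fun s => x a s) c * Derive (fun s => y s c) a).
  set (cc := fun a c => K * phi a c * pd (true :: true :: nil) f (x a c) (y a c)).
  assert (Pt : forall a c, U a c -> J a c <> 0 ->
     Derive (fun s => lam s c) a = - cc a c * Derive (fun s => y s c) a /\
     Derive (fun s => lam a s) c = - cc a c * Derive (fun s => y a s) c).
  { intros a c Hac HJac.
    pose proof (E1_lemma U lam y phi a c HU Sl Sy Sp Hu Hw Hac) as e1.
    pose proof (E2_lemma U D f lam x y phi xi K a c HU HD Sf Sl Sx Sy Sp Sxi HXD Hu Hw Hxu Hxw Hac) as e2.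
    destruct (alg1 _ _ _ _ _ _ _ e1 e2) as [r1 r2].
    fold (J a c) in r1, r2. fold (cc a c) in r1, r2.
    apply Rmult_integral in r1. apply Rmult_integral in r2.
    destruct r1 as [r1|r1]; [contradiction|]. destruct r2 as [r2|r2]; [contradiction|].
    split; lra. }
  assert (CJ : continuity_2d_pt J u w).
  { unfold J. apply continuity_2d_pt_minus; apply continuity_2d_pt_mult.
    - apply (cont_pd U x (true :: nil)); auto.
    - apply (cont_pd U y (false :: nil)); auto.
    - apply (cont_pd U x (false :: nil)); auto.
    - apply (cont_pd U y (true :: nil)); auto. }
  assert (Loc : locally_2d (fun a c => U a c /\ J a c <> 0) u w).
  { assert (Hpos : 0 < Rabs (J u w)) by (apply Rabs_pos_lt; exact HJ).
    destruct (CJ (mkposreal _ Hpos)) as [d1 Hd1].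
    destruct (open2_loc2 U u w HU Huw) as [d2 Hd2].
    exists (mkposreal _ (Rmin_pos _ _ (cond_pos d1) (cond_pos d2))). simpl. intros a c Ha Hc.
    split.
    - apply Hd2; eapply Rlt_le_trans; eauto; apply Rmin_r.
    - assert (Q := Hd1 a c ltac:(eapply Rlt_le_trans; eauto; apply Rmin_l) ltac:(eapply Rlt_le_trans; eauto; apply Rmin_l)).
      simpl in Q. intros E. rewrite E in Q. rewrite Rminus_0_l, Rabs_Ropp in Q. lra. }
  pose proof (smooth_schwarz U lam u w HU Sl Huw) as Sch.
  pose proof (smooth_schwarz U y u w HU Sy Huw) as SchY.
  assert (L1 : Derive (fun z => Derive (fun t => lam z t) w) u =
     -(K * ((- lam u w * Derive (fun s => y s w) u) * pd (true :: true :: nil) f (x u w) (y u w)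
            + phi u w * (pd (true :: true :: true :: nil) f (x u w) (y u w) * Derive (fun s => x s w) u
                         + pd (false :: true :: true :: nil) f (x u w) (y u w) * Derive (fun s => y s w) u))
       * Derive (fun t => y u t) w
       + K * phi u w * pd (true :: true :: nil) f (x u w) (y u w) * Derive (fun z => Derive (fun t => y z t) w) u)).
  { transitivity (Derive (fun z => - (K * phi z w * pd (true :: true :: nil) f (x z w) (y z w)) * Derive (fun t => y z t) w) u).
    { apply Derive_ext_loc. generalize (locally_2d_1d_const_y _ _ _ Loc). apply filter_imp.
      intros s [Hs1 Hs2]. apply (Pt s w Hs1 Hs2). }
    apply is_derive_unique.
    apply (H3d (fun z => phi z w) (fun z => pd (true :: true :: nil) f (x z w) (y z w))
               (fun z => Derive (fun t => y z t) w)).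
    - rewrite <- Hu by auto. apply Derive_correct. apply (sm_u U phi nil u w Sp Huw).
    - apply (comp_u U D); auto.
    - apply Derive_correct. apply (sm_u U y (false :: nil) u w Sy Huw). }
  assert (L2 : Derive (fun z => Derive (fun t => lam t z) u) w =
     -(K * ((- lam u w * Derive (fun s => y u s) w) * pd (true :: true :: nil) f (x u w) (y u w)
            + phi u w * (pd (true :: true :: true :: nil) f (x u w) (y u w) * Derive (fun s => x u s) w
                         + pd (false :: true :: true :: nil) f (x u w) (y u w) * Derive (fun s => y u s) w))
       * Derive (fun t => y t w) u
       + K * phi u w * pd (true :: true :: nil) f (x u w) (y u w) * Derive (fun z => Derive (fun t => y t z) u) w)).
  { transitivity (Derive (fun z => - (K * phi u z * pd (true :: true :: nil) f (x u z) (y u z)) * Derive (fun t => y t z) u) w).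
    { apply Derive_ext_loc. generalize (locally_2d_1d_const_x _ _ _ Loc). apply filter_imp.
      intros s [Hs1 Hs2]. apply (Pt u s Hs1 Hs2). }
    apply is_derive_unique.
    apply (H3d (fun z => phi u z) (fun z => pd (true :: true :: nil) f (x u z) (y u z))
               (fun z => Derive (fun t => y t z) u)).
    - rewrite <- Hw by auto. apply Derive_correct. apply (sm_w U phi nil u w Sp Huw).
    - apply (comp_w U D); auto.
    - apply Derive_correct. apply (sm_w U y (true :: nil) u w Sy Huw). }
  rewrite L1, L2, SchY in Sch.
  set (B := Derive (fun z => Derive (fun t => y t z) u) w) in *.
  set (xu := Derive (fun s => x s w) u) in *.
  set (xw := Derive (fun s => x u s) w) in *.
  set (yu := Derive (fun s => y s w) u) in *.
  set (yw := Derive (fun s => y u s) w) in *.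
  set (F11 := pd (true :: true :: nil) f (x u w) (y u w)) in *.
  set (F111 := pd (true :: true :: true :: nil) f (x u w) (y u w)) in *.
  set (F112 := pd (false :: true :: true :: nil) f (x u w) (y u w)) in *.
  set (p := phi u w) in *. set (l := lam u w) in *.
  assert (Z : K * (p * F111) * (xu * yw - xw * yu) = 0).
  { replace (K * (p * F111) * (xu * yw - xw * yu)) with
      ((-(K * ((- l * yw) * F11 + p * (F111 * xw + F112 * yw)) * yu + K * p * F11 * B))
      - (-(K * ((- l * yu) * F11 + p * (F111 * xu + F112 * yu)) * yw + K * p * F11 * B))) by ring.
    rewrite Sch. ring. }
  apply Rmult_integral in Z. destruct Z as [Z|Z].
  - apply Rmult_integral in Z. destruct Z as [Z|Z]; [contradiction|exact Z].
  - exfalso. apply HJ. exact Z.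
Qed.

Theorem mainTheorem3
  (eps delta : R) (f : R -> R -> R) (D : R -> R -> Prop)
  (U : R -> R -> Prop) (X v : nat -> R -> R -> R) (lam : R -> R -> R) :
  (eps = 1 \/ eps = -1) ->
  (delta = 1 \/ delta = -1) ->
  open2 D -> smooth_on D f ->
  open2 U ->
  (forall k, (k < 3)%nat -> smooth_on U (X k)) ->
  (forall u w, U u w -> D (X 1%nat u w) (X 2%nat u w)) ->
  (forall u w, U u w ->
     (Xu X 1%nat u w * Xw X 2%nat u w - Xu X 2%nat u w * Xw X 1%nat u w <> 0 \/
      Xu X 2%nat u w * Xw X 0%nat u w - Xu X 0%nat u w * Xw X 2%nat u w <> 0 \/
      Xu X 0%nat u w * Xw X 1%nat u w - Xu X 1%nat u w * Xw X 0%nat u w <> 0)) ->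
  (forall u w, U u w ->
     gX eps f X u w (fun k => Xu X k u w) (fun k => Xu X k u w) *
     gX eps f X u w (fun k => Xw X k u w) (fun k => Xw X k u w) -
     gX eps f X u w (fun k => Xu X k u w) (fun k => Xw X k u w) ^ 2 <> 0) ->
  (forall a, (a < 3)%nat -> smooth_on U (v a)) ->
  (forall u w, U u w ->
     gX eps f X u w (fun k => Vc f X v k u w) (fun k => Xu X k u w) = 0 /\
     gX eps f X u w (fun k => Vc f X v k u w) (fun k => Xw X k u w) = 0) ->
  (forall u w, U u w ->
     eps * v 0%nat u w ^ 2 + v 1%nat u w ^ 2 - v 2%nat u w ^ 2 = delta) ->
  (forall u w, U u w -> v 0%nat u w <> 0) ->
  smooth_on U lam ->
  (forall u w a b k, U u w -> (k < 3)%nat ->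
     - (a * nablaU eps f X v k u w + b * nablaW eps f X v k u w) =
     lam u w * (a * Xu X k u w + b * Xw X k u w)) ->
  forall u w, U u w ->
    v 2%nat u w * (v 1%nat u w - v 2%nat u w) ^ 2 *
    pd (true :: true :: true :: nil) f (X 1%nat u w) (X 2%nat u w) = 0.
Proof.
  intros Heps _ HD Sf HU SX HXD Himm _ Sv Hnorm _ _ Sl Humb u w Huw.
  assert (He : eps <> 0) by (destruct Heps; lra).
  assert (Hs2 : sqrt 2 <> 0) by (apply Rgt_not_eq, sqrt_lt_R0; lra).
  set (phi := fun a c => / sqrt 2 * v 1%nat a c + (- / sqrt 2) * v 2%nat a c).
  assert (Sp : smooth_on U phi) by (apply smooth_lin; auto).
  assert (Sx : smooth_on U (X 1%nat)) by (apply SX; auto).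
  assert (Sy : smooth_on U (X 2%nat)) by (apply SX; auto).
  assert (Sxi : smooth_on U (v 0%nat)) by (apply Sv; auto).
  assert (PV : forall a c, Vc f X v 2 a c = phi a c).
  { intros a c. rewrite Vc2. unfold phi. field. auto. }
  assert (Hu : forall a c, U a c -> Derive (fun s => phi s c) a = - lam a c * Derive (fun s => X 2%nat s c) a).
  { intros a c Hac. pose proof (Humb a c 1 0 2%nat Hac ltac:(auto)) as H.
    rewrite nabla2U in H. rewrite (Derive_ext _ (fun s => phi s c)) in H by (intro; apply PV).
    unfold Xu in H. lra. }
  assert (Hw : forall a c, U a c -> Derive (fun s => phi a s) c = - lam a c * Derive (fun s => X 2%nat a s) c).
  { intros a c Hac. pose proof (Humb a c 0 1 2%nat Hac ltac:(auto)) as H.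
    rewrite nabla2W in H. rewrite (Derive_ext _ (fun s => phi a s)) in H by (intro; apply PV).
    unfold Xw in H. lra. }
  assert (Hxu : forall a c, U a c -> Derive (fun s => v 0%nat s c) a = - lam a c * Derive (fun s => X 1%nat s c) a
      + / 2 / eps * pd (true :: nil) f (X 1%nat a c) (X 2%nat a c) * phi a c * Derive (fun s => X 2%nat s c) a).
  { intros a c Hac. pose proof (Humb a c 1 0 1%nat Hac ltac:(auto)) as H.
    rewrite nabla1U in H by auto. rewrite (Derive_ext _ (fun s => v 0%nat s c)) in H by (intro; apply Vc1).
    rewrite PV in H. unfold Xu in H. simpl pd. lra. }
  assert (Hxw : forall a c, U a c -> Derive (fun s => v 0%nat a s) c = - lam a c * Derive (fun s => X 1%nat a s) c
      + / 2 / eps * pd (true :: nil) f (X 1%nat a c) (X 2%nat a c) * phi a c * Derive (fun s => X 2%nat a s) c).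
  { intros a c Hac. pose proof (Humb a c 0 1 1%nat Hac ltac:(auto)) as H.
    rewrite nabla1W in H by auto. rewrite (Derive_ext _ (fun s => v 0%nat a s)) in H by (intro; apply Vc1).
    rewrite PV in H. unfold Xu, Xw in H. simpl pd. lra. }
  assert (HK : / 2 / eps <> 0).
  { unfold Rdiv. apply Rmult_integral_contrapositive_currified; apply Rinv_neq_0_compat; lra. }
  assert (Ephi : v 1%nat u w - v 2%nat u w = sqrt 2 * phi u w).
  { unfold phi. field. auto. }
  rewrite Ephi.
  destruct (Req_dec (Derive (fun s => X 1%nat s w) u * Derive (fun s => X 2%nat u s) w -
                     Derive (fun s => X 1%nat u s) w * Derive (fun s => X 2%nat s w) u) 0) as [HJ|HJ].
  - (* degenerate projection: phi = 0 *)
    destruct (Hnorm u w Huw) as [N1 N2].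
    rewrite gXV in N1, N2.
    assert (P0 : phi u w = 0).
    { replace ((v 1%nat u w - v 2%nat u w) / sqrt 2) with (phi u w) in N1, N2 by (unfold phi; field; auto).
      unfold Xu, Xw in *.
      set (xu := Derive (fun s => X 1%nat s w) u) in *.
      set (xw := Derive (fun s => X 1%nat u s) w) in *.
      set (yu := Derive (fun s => X 2%nat s w) u) in *.
      set (yw := Derive (fun s => X 2%nat u s) w) in *.
      set (tu := Derive (fun s => X 0%nat s w) u) in *.
      set (tw := Derive (fun s => X 0%nat u s) w) in *.
      set (p := phi u w) in *.
      set (A := eps * v 0%nat u w) in *.
      set (Bb := Vc f X v 0 u w) in *.
      set (F := f (X 1%nat u w) (X 2%nat u w)) in *.
      destruct (Req_dec p 0) as [Hp|Hp]; auto. exfalso.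
      assert (Z1 : p * (tu * yw - tw * yu) = 0).
      { replace (p * (tu * yw - tw * yu)) with
          (yw * (Bb * yu + A * xu + p * (tu + F * yu)) - yu * (Bb * yw + A * xw + p * (tw + F * yw))
           - A * (xu * yw - xw * yu)) by ring.
        rewrite N1, N2, HJ. ring. }
      assert (Z2 : p * (tu * xw - tw * xu) = 0).
      { replace (p * (tu * xw - tw * xu)) with
          (xw * (Bb * yu + A * xu + p * (tu + F * yu)) - xu * (Bb * yw + A * xw + p * (tw + F * yw))
           + (Bb + p * F) * (xu * yw - xw * yu)) by ring.
        rewrite N1, N2, HJ. ring. }
      apply Rmult_integral in Z1. apply Rmult_integral in Z2.
      destruct Z1 as [Z1|Z1]; [contradiction|]. destruct Z2 as [Z2|Z2]; [contradiction|].
      destruct (Himm u w Huw) as [I|[I|I]]; unfold Xu, Xw in I; fold xu xw yu yw tu tw in I; apply I.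
      + rewrite <- HJ. ring.
      + lra.
      + lra. }
    rewrite P0. ring.
  - pose proof (F_lemma U D f lam (X 1%nat) (X 2%nat) phi (v 0%nat) (/ 2 / eps) u w HU HD Sf Sl Sx Sy Sp Sxi
                  HXD Hu Hw Hxu Hxw HK Huw HJ) as Z.
    replace (v 2%nat u w * (sqrt 2 * phi u w) ^ 2 * pd (true :: true :: true :: nil) f (X 1%nat u w) (X 2%nat u w))
      with (v 2%nat u w * sqrt 2 * sqrt 2 * phi u w * (phi u w * pd (true :: true :: true :: nil) f (X 1%nat u w) (X 2%nat u w))) by ring.
    rewrite Z. ring.
Qed.
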